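(* Let $p\in(0,1)$, $x>2$, and let $(\xi_n)_{n\geq1}$ be i.i.d. with $\mathbf{P}(\xi_1=1)=p=1-\mathbf{P}(\xi_1=-1)$. Set $W_0:=x$, $B_1:=1$, $W_n:=W_{n-1}+\xi_nB_n$, $B_{n+1}:=B_n2^{\xi_n}$ for $n\geq1$, $f(x,p):=\mathbf{P}(W_n\leq0\text{ for some }n)$, $S_0:=0$, $S_n:=\sum_{i=1}^n\xi_i$, and $$S:=\sum_{n=1}^\infty\mathbf{1}_{\{\xi_n=1\}}2^{S_{n-1}}\in[0,\infty].$$ Then $f(x,p)=\mathbf{P}(S>x-2)$. *)

(* Defs.v *)
From HB Require Import structures.
From mathcomp Require Import all_boot all_order all_algebra.
From mathcomp Require Import all_classical all_reals all_analysis.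
Set Implicit Arguments. Unset Strict Implicit. Unset Printing Implicit Defensive.
Import Order.TTheory GRing.Theory Num.Theory.
Local Open Scope classical_set_scope.
Local Open Scope ring_scope.

Section Defs.
Context (d : measure_display) (T : measurableType d) (R : realType).

(* Mutual independence of the sequence (X_n)_{n>=1}: for every n and all
   Borel sets A_1..A_n, P(X_1 in A_1, ..., X_n in A_n) = prod P(X_i in A_i).
   (Taking A_i = setT this covers every finite subfamily.) *)
Definition indep_seq (P : probability T R) (X : nat -> T -> R) : Prop :=
  forall (n : nat) (A : nat -> set R), (forall i, measurable (A i)) ->
    P (\big[setI/setT]_(1 <= i < n.+1) (X i @^-1` A i)) =
    (\prod_(1 <= i < n.+1) P (X i @^-1` A i))%E.

(* B_1 = 1, B_{n+1} = B_n 2^{xi_n} (B_0 is an unused dummy value 1). *)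
Fixpoint bet (xi : nat -> T -> R) (n : nat) (t : T) : R :=
  match n with
  | 0 => 1
  | m.+1 => match m with
            | 0 => 1
            | _ => bet xi m t * (2 `^ (xi m t))
            end
  end.

Fixpoint wealth (x : R) (xi : nat -> T -> R) (n : nat) (t : T) : R :=
  match n with
  | 0 => x
  | m.+1 => wealth x xi m t + xi m.+1 t * bet xi m.+1 t
  end.

Definition psum (xi : nat -> T -> R) (n : nat) (t : T) : R :=
  \sum_(1 <= i < n.+1) xi i t.

Definition Ssum (xi : nat -> T -> R) (t : T) : \bar R :=
  (\sum_(1 <= n <oo) ((if xi n t == 1 then 1 else 0) * 2 `^ (psum xi n.-1 t))%:E)%E.

End Defs.

(* Main.v *)
Require Import Defs.
From HB Require Import structures.
From mathcomp Require Import all_boot all_order all_algebra.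
From mathcomp Require Import all_classical all_reals all_analysis.
From mathcomp Require Import measurable_realfun.
From mathcomp Require Import zify ring lra.
Import Order.TTheory GRing.Theory Num.Theory.
Local Open Scope classical_set_scope.
Local Open Scope ring_scope.

Section PSsec.
Context (d : measure_display) (T : measurableType d) (R : realType).
Context (P : probability T R) (xi : nat -> T -> R).

Definition PS (A : nat -> set R) (n : nat) : set T :=
  \big[setI/setT]_(1 <= i < n.+1) (xi i @^-1` A i).

Definition upd (A : nat -> set R) (i0 : nat) (B : set R) : nat -> set R :=
  fun i => if i == i0 then B else A i.

Lemma PS0 A : PS A 0 = setT.
Proof. by rewrite /PS big_geq. Qed.

Lemma PSrec A n : PS A n.+1 = PS A n `&` xi n.+1 @^-1` A n.+1.
Proof. by rewrite /PS big_nat_recr. Qed.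

Lemma in_PS A n t : PS A n t <-> (forall i, (1 <= i <= n)%N -> A i (xi i t)).
Proof.
elim: n => [|n IH].
  rewrite PS0; split => // _ i /andP[h1 h2]; by move: (leq_trans h1 h2).
rewrite PSrec; split.
  case=> H1 H2; move/IH: H1 => H1 i /andP[h1]; rewrite leq_eqVlt => /orP[/eqP -> //|h2].
  by apply: H1; rewrite h1.
move=> H; split; last by apply: H; rewrite /= leqnn.
apply/IH => i /andP[h1 h2]; apply: H; rewrite h1 /=; exact: leqW.
Qed.

Hypothesis hmeas : forall n, (1 <= n)%N -> measurable_fun setT (xi n).
Hypothesis hindep : indep_seq P xi.

Lemma mpre i (B : set R) : (1 <= i)%N -> measurable B -> measurable (xi i @^-1` B).
Proof. by move=> hi mB; rewrite -[X in measurable X]setTI; apply: hmeas. Qed.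

Lemma PS_meas A n : (forall i, measurable (A i)) -> measurable (PS A n).
Proof.
move=> mA; elim: n => [|n IH]; first by rewrite PS0.
by rewrite PSrec; apply: measurableI => //; apply: mpre.
Qed.

Lemma PS_upd A n i0 B : (1 <= i0 <= n)%N -> A i0 = setT ->
  PS (upd A i0 B) n = PS A n `&` xi i0 @^-1` B.
Proof.
move=> hi hA; apply/seteqP; split => t.
  move=> /in_PS H; split; last by move: (H i0 hi); rewrite /upd eqxx.
  apply/in_PS => i hi'; move: (H i hi'); rewrite /upd.
  by case: eqP => [->|]; rewrite ?hA.
move=> [/in_PS H1 H2]; apply/in_PS => i hi'; rewrite /upd.
by case: eqP => [->|] //; move=> _; apply: H1.
Qed.

Local Open Scope ereal_scope.

Lemma P_PS_upd A n i0 B : (forall i, measurable (A i)) -> measurable B ->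
  (1 <= i0 <= n)%N -> A i0 = setT ->
  P (PS (upd A i0 B) n) = P (PS A n) * P (xi i0 @^-1` B).
Proof.
move=> mA mB hi hA.
have mU : forall i, measurable (upd A i0 B i).
  by move=> i; rewrite /upd; case: eqP.
rewrite /PS !hindep //.
have hin : i0 \in index_iota 1 n.+1 by rewrite mem_index_iota ltnS.
rewrite (bigD1_seq i0) ?iota_uniq //= [in RHS](bigD1_seq i0) ?iota_uniq //=.
rewrite /upd eqxx hA preimage_setT probability_setT mul1e muleC.
congr (_ * _); apply: eq_bigr => i /negbTE ->; by [].
Qed.

Local Close Scope ereal_scope.

Lemma updN A i0 B i : i != i0 -> upd A i0 B i = A i.
Proof. by rewrite /upd => /negbTE ->. Qed.

Definition pat (k : nat) : set T :=
  [set t | xi (3 * k).+1 t = 1 /\ xi (3 * k).+2 t = -1 /\ xi (3 * k).+3 t = -1].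

Fixpoint C (K N : nat) : set T :=
  match N with 0 => setT | N'.+1 => C K N' `&` ~` pat (K + N') end.

Definition A3 A k := upd (upd (upd A (3 * k).+1 [set 1]) (3 * k).+2 [set -1]) (3 * k).+3 [set -1].

Lemma pat_meas k : measurable (pat k).
Proof.
have -> : pat k = xi (3 * k).+1 @^-1` [set 1] `&` (xi (3 * k).+2 @^-1` [set -1] `&` xi (3 * k).+3 @^-1` [set -1]).
  by apply/seteqP; split => t.
by apply: measurableI; [|apply: measurableI]; apply: mpre.
Qed.

Lemma C_meas K N : measurable (C K N).
Proof.
elim: N => [|N IH] //=; apply: measurableI => //; apply: measurableC; exact: pat_meas.
Qed.

Lemma PS_pat A n k : ((3 * k).+3 <= n)%N -> A (3 * k).+1 = setT ->
  A (3 * k).+2 = setT -> A (3 * k).+3 = setT ->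
  PS (A3 A k) n = PS A n `&` pat k.
Proof.
move=> hn h1 h2 h3.
have n1 : (3 * k).+3 != (3 * k).+1 by apply/eqP; lia.
have n2 : (3 * k).+3 != (3 * k).+2 by apply/eqP; lia.
have n3 : (3 * k).+2 != (3 * k).+1 by apply/eqP; lia.
rewrite /A3 PS_upd; last first.
  by rewrite !updN.
  by rewrite /= (leq_trans _ hn).
rewrite PS_upd; last first.
  by rewrite !updN.
  by rewrite /= (leq_trans _ hn) // ltnW.
rewrite PS_upd //; last by rewrite /= (leq_trans _ hn) // ltnW // ltnW.
apply/seteqP; split => t /=.
  by move=> [[[H0 H1] H2] H3].
by move=> [H0 [H1 [H2 H3]]].
Qed.

Context (p : R).
Hypothesis hplus : forall n, (1 <= n)%N -> P (xi n @^-1` [set 1]) = p%:E.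
Hypothesis hminus : forall n, (1 <= n)%N -> P (xi n @^-1` [set -1]) = (1 - p)%:E.

Definition q := p * (1 - p) * (1 - p).

Lemma P_PS_pat A n k : (forall i, measurable (A i)) -> ((3 * k).+3 <= n)%N ->
  A (3 * k).+1 = setT -> A (3 * k).+2 = setT -> A (3 * k).+3 = setT ->
  P (PS A n `&` pat k) = (P (PS A n) * q%:E)%E.
Proof.
move=> mA hn h1 h2 h3.
have n1 : (3 * k).+3 != (3 * k).+1 by apply/eqP; lia.
have n2 : (3 * k).+3 != (3 * k).+2 by apply/eqP; lia.
have n3 : (3 * k).+2 != (3 * k).+1 by apply/eqP; lia.
have m1 : forall i, measurable (upd A (3 * k).+1 [set 1] i).
  by move=> i; rewrite /upd; case: eqP.
have m2 : forall i, measurable (upd (upd A (3 * k).+1 [set 1]) (3 * k).+2 [set -1] i).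
  by move=> i; rewrite /upd; case: eqP => //; case: eqP.
rewrite -PS_pat // /A3 P_PS_upd //; try by (rewrite ?updN //); try lia.
rewrite P_PS_upd //; try by (rewrite ?updN //); try lia.
rewrite P_PS_upd //; try by (rewrite ?updN //); try lia.
by rewrite hplus // !hminus // /q !EFinM !muleA.
Qed.

Lemma A3_meas A k : (forall i, measurable (A i)) -> forall i, measurable (A3 A k i).
Proof. by move=> mA i; rewrite /A3 /upd; case: eqP => //; case: eqP => //; case: eqP. Qed.

Lemma claim K N : forall A n, (forall i, measurable (A i)) ->
  (forall i, (3 * K < i <= 3 * (K + N))%N -> A i = setT) ->
  (3 * (K + N) <= n)%N ->
  P (PS A n `&` C K N) = (P (PS A n) * ((1 - q) ^+ N)%:E)%E.
Proof.
elim: N => [|N IH] A n mA hA hn.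
  by rewrite /= setIT expr0 mule1.
have mPS : measurable (PS A n) by exact: PS_meas.
have mX : measurable (PS A n `&` C K N) by apply: measurableI => //; exact: C_meas.
rewrite /= setIA -setDE measureD //; last 2 first.
- exact: pat_meas.
- by rewrite -ge0_fin_numE // fin_num_measure.
rewrite setIAC.
have hk : ((3 * (K + N)).+3 <= n)%N by lia.
have h1 : forall i, (3 * K < i <= 3 * (K + N))%N -> A i = setT.
  by move=> i hi; apply: hA; lia.
have h2 : (3 * (K + N) <= n)%N by lia.
have h3 : forall i, (3 * K < i <= 3 * (K + N))%N -> A3 A (K + N) i = setT.
  move=> i hi; rewrite /A3 !updN; try (apply/eqP; lia); apply: hA; lia.
have m3 : forall i, measurable (A3 A (K + N) i) by exact: A3_meas.
have e2 := IH (A3 A (K + N)) n m3 h3 h2.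
rewrite PS_pat in e2; try by (apply: hA; lia).
rewrite P_PS_pat in e2; try by (apply: hA; lia).
have e1 := IH A n mA h1 h2.
transitivity (P (PS A n) * ((1 - q) ^+ N)%:E - (P (PS A n) * q%:E) * ((1 - q) ^+ N)%:E)%E.
  by congr (_ - _)%E; [exact: e1|exact: e2].
rewrite -(fineK (fin_num_measure P _ mPS)).
rewrite -!EFinM -EFinB exprSr; congr EFin; rewrite /q; ring.
all: by [].
Qed.

Lemma PS_setT n : PS (fun _ => setT) n = setT.
Proof. by apply/seteqP; split => // t _; apply/in_PS. Qed.

Lemma PC K N : P (C K N) = ((1 - q) ^+ N)%:E.
Proof.
have := @claim K N (fun _ => setT) (3 * (K + N)) (fun _ => measurableT) (fun _ _ => erefl) (leqnn _).
by rewrite PS_setT setTI probability_setT mul1e.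
Qed.

Definition H K : set T := [set t | forall k, (K <= k)%N -> ~ pat k t].

Lemma H_meas K : measurable (H K).
Proof.
have -> : H K = \bigcap_(k in [set k | (K <= k)%N]) ~` pat k.
  by apply/seteqP; split => t /= h k hk; apply: h.
apply: bigcap_measurableType => k _; apply: measurableC; exact: pat_meas.
Qed.

Hypothesis hp0 : 0 < p.
Hypothesis hp1 : p < 1.

Lemma H_null K : P (H K) = 0%E.
Proof.
have hq0 : 0 < q by rewrite /q !mulr_gt0 // subr_gt0.
have hq1 : q < 1.
have hp1' : p < 1 := hp1.
have hp0' : 0 < p := hp0.
have h1 : 0 < 1 - p by lra.
  have h2 : (1 - p) * (1 - p) < 1 by nra.
  have h3 : 0 <= (1 - p) * (1 - p) by nra.
  rewrite /q -mulrA; nra.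
have hle : forall N, (P (H K) <= ((1 - q) ^+ N)%:E)%E.
  move=> N; rewrite -(PC K N); apply: le_measure; rewrite ?inE.
  - exact: H_meas.
  - exact: C_meas.
  elim: N => [|N IH] //= t Ht; split; first exact: IH.
  by apply: Ht; rewrite leq_addr.
have mH := H_meas K.
rewrite -(fineK (fin_num_measure P _ mH)); congr EFin.
set h := fine (P (H K)).
have h0 : 0 <= h by rewrite /h fine_ge0 // measure_ge0.
have hN : forall N, h <= (1 - q) ^+ N.
  by move=> N; rewrite -lee_fin /h fineK ?fin_num_measure.
apply/eqP; rewrite eq_le h0 andbT; apply/negP => /negP; rewrite -ltNge => hpos.
have cg := @cvg_geometric R 1 (1 - q).
have : `|1 - q| < 1 by rewrite ger0_norm; lra.
move=> /cg /(cvgr_lt) /(_ h hpos) [N _ /(_ N (leqnn N))] /=.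
rewrite mul1r => hlt.
by move: (hN N); rewrite leNgt hlt.
Qed.

Definition Z (i : nat) : set T :=
  if (1 <= i)%N then [set t | xi i t <> 1 /\ xi i t <> -1] else set0.

Lemma Z_null i : P (Z i) = 0%E.
Proof.
rewrite /Z; case: ifP => hi; last exact: measure0.
have -> : [set t | xi i t <> 1 /\ xi i t <> -1] =
   ~` (xi i @^-1` [set 1] `|` xi i @^-1` [set -1]).
  apply/seteqP; split => t /=.
    by move=> [h1 h2] [].
  by move=> h; split => h'; apply: h; [left|right].
have hm : (-1 : R) < 1 by lra.
rewrite probability_setC; last by apply: measurableU; apply: mpre.
rewrite measureU; try by apply: mpre.
  transitivity (1 - (p%:E + (1 - p)%:E))%E.
    by congr (_ - (_ + _))%E; [exact: hplus|exact: hminus].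
  apply: (@eq_trans _ _ ((1 - (p + (1 - p)))%:E)); first by [].
  by rewrite (_ : 1 - (p + (1 - p)) = 0) //; ring.
apply/seteqP; split => t //= [h1 h2].
by rewrite h1 in h2; move: hm; rewrite -h2 ltxx.
Qed.

Definition term (t : T) (i : nat) : R :=
  (if xi i t == 1 then 1 else 0) * 2 `^ psum xi i.-1 t.

Definition a (t : T) (n : nat) : R := \sum_(1 <= i < n.+1) term t i.

Lemma term_ge0 t i : 0 <= term t i.
Proof. by rewrite /term; case: ifP => _; rewrite ?mul0r // mul1r powR_ge0. Qed.

Lemma a0 t : a t 0 = 0.
Proof. by rewrite /a big_geq. Qed.

Lemma aS t n : a t n.+1 = a t n + term t n.+1.
Proof. by rewrite /a big_nat_recr. Qed.

Lemma a_mono t n m : (n <= m)%N -> a t n <= a t m.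
Proof.
move=> /subnK <-; elim: (m - n)%N => [|k IH] //=.
by rewrite addSn aS (le_trans IH) // lerDl term_ge0.
Qed.

Lemma psumS t n : psum xi n.+1 t = psum xi n t + xi n.+1 t.
Proof. by rewrite /psum big_nat_recr. Qed.

Lemma bet_psum t n : bet xi n.+1 t = 2 `^ psum xi n t.
Proof.
elim: n => [|n IH].
  by rewrite /= /psum big_geq // powRr0.
rewrite [LHS]/= -/(bet xi n.+1 t) IH psumS powRD //.
by rewrite pnatr_eq0 implybT.
Qed.

Lemma bet_gt0 t n : 0 < bet xi n.+1 t.
Proof. by rewrite bet_psum powR_gt0. Qed.

Lemma term_bet t n : term t n.+1 = (if xi n.+1 t == 1 then 1 else 0) * bet xi n.+1 t.
Proof. by rewrite /term bet_psum. Qed.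

Lemma m1_neq1 : ((-1 : R) == 1) = false.
Proof. have hm : (-1 : R) < 1 by lra. exact: lt_eqF. Qed.

Lemma wealth_inv (x : R) t n :
  (forall i, (1 <= i <= n)%N -> xi i t = 1 \/ xi i t = -1) ->
  wealth x xi n t = x - 2 - a t n + 2 * bet xi n.+1 t.
Proof.
elim: n => [|n IH] H1.
  by rewrite /= a0; ring.
have -> : wealth x xi n.+1 t = wealth x xi n t + xi n.+1 t * bet xi n.+1 t by [].
rewrite IH; last by move=> i /andP[h1 h2]; apply: H1; rewrite h1 /= leqW.
rewrite aS term_bet.
have -> : bet xi n.+2 t = bet xi n.+1 t * 2 `^ (xi n.+1 t) by [].
have [->|->] := H1 n.+1 (leqnn _).
  by rewrite eqxx powRr1 //; ring.
rewrite m1_neq1 powRN powRr1 //; field.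
by [].
Qed.

Lemma a_le_S t n : ((a t n)%:E <= Ssum xi t)%E.
Proof.
rewrite /a -sumEFin.
apply: (@nneseries_lim_ge _ (fun i => (term t i)%:E) xpredT 1 n.+1).
by move=> i _ _; rewrite lee_fin term_ge0.
Qed.

Lemma S_gt (x : R) t : 0 <= x - 2 -> ((x - 2)%:E < Ssum xi t)%E -> exists n, x - 2 < a t n.
Proof.
move=> hx2 hS; apply: contrapT => hn.
have hle : forall n, a t n <= x - 2.
  move=> n; rewrite leNgt; apply/negP => h; apply: hn; by exists n.
have : (Ssum xi t <= (x - 2)%:E)%E.
  apply: lime_le.
    by apply: (@is_cvg_nneseries _ (fun i => (term t i)%:E) xpredT 1) => i _ _; rewrite lee_fin term_ge0.
  apply: nearW => -[|m].
    by rewrite big_geq // lee_fin.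
  by rewrite sumEFin lee_fin; exact: hle.
by rewrite leNgt hS.
Qed.

Definition G : set T := [set t | forall i, (1 <= i)%N -> xi i t = 1 \/ xi i t = -1].

Lemma ruin_sub (x : R) t : G t -> (exists n, wealth x xi n t <= 0) ->
  ((x - 2)%:E < Ssum xi t)%E.
Proof.
move=> hG [n hn].
rewrite wealth_inv in hn; last by move=> i /andP[h1 _]; apply: hG.
have hb := bet_gt0 t n.
apply: (lt_le_trans _ (a_le_S t n)); rewrite lte_fin; lra.
Qed.

Lemma sx_sub (x : R) t : 0 <= x - 2 -> G t -> ~ (\bigcup_K H K) t ->
  ((x - 2)%:E < Ssum xi t)%E -> exists n, wealth x xi n t <= 0.
Proof.
move=> hx2 hG hH hS.
have [n hn] := @S_gt x t hx2 hS.
have [k [hk hpat]] : exists k, (n <= k)%N /\ pat k t.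
  apply: contrapT => hne; apply: hH; exists n => // k hk hp.
  by apply: hne; exists k.
move: hpat => [e1 [e2 e3]].
set m := (3 * k)%N.
exists m.+3.
have -> : wealth x xi m.+3 t = wealth x xi m t + xi m.+1 t * bet xi m.+1 t
   + xi m.+2 t * (bet xi m.+1 t * 2 `^ (xi m.+1 t))
   + xi m.+3 t * (bet xi m.+1 t * 2 `^ (xi m.+1 t) * 2 `^ (xi m.+2 t)) by [].
rewrite e1 e2 e3 powRr1 // powRN powRr1 //.
rewrite wealth_inv; last by move=> i /andP[h1 _]; apply: hG.
have hm : (n <= m)%N by rewrite /m; lia.
have := @a_mono t n m hm.
have h2 : (2 : R) * 2^-1 = 1 by rewrite mulfV // pnatr_eq0.
nra.
Qed.

Lemma psum_meas n : measurable_fun setT (fun t => psum xi n t).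
Proof.
elim: n => [|n IH].
  have -> : (fun t => psum xi 0 t) = cst 0 by apply/funext => t; rewrite /psum big_geq.
  exact: measurable_cst.
have -> : (fun t => psum xi n.+1 t) = (fun t => psum xi n t) \+ xi n.+1.
  by apply/funext => t; rewrite psumS.
by apply: measurable_funD => //; apply: hmeas.
Qed.

Lemma bet_meas n : measurable_fun setT (fun t => bet xi n.+1 t).
Proof.
have -> : (fun t => bet xi n.+1 t) = powR 2 \o (fun t => psum xi n t).
  by apply/funext => t; rewrite bet_psum.
apply: measurableT_comp; [exact: measurable_powRr | exact: psum_meas].
Qed.

Lemma wealth_meas (x : R) n : measurable_fun setT (fun t => wealth x xi n t).
Proof.
elim: n => [|n IH]; first exact: measurable_cst.
have -> : (fun t => wealth x xi n.+1 t) =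
   (fun t => wealth x xi n t) \+ (xi n.+1 \* (fun t => bet xi n.+1 t)) by [].
apply: measurable_funD => //; apply: measurable_funM; [exact: hmeas | exact: bet_meas].
Qed.

Lemma term_meas n : measurable_fun setT (fun t => term t n.+1).
Proof.
rewrite /term.
have -> : (fun t => (if xi n.+1 t == 1 then 1 else 0) * 2 `^ psum xi n.+1.-1 t) =
  (fun t => if xi n.+1 t == 1 then 1 else 0) \* (powR 2 \o (fun t => psum xi n t)) by [].
apply: measurable_funM.
  apply: measurable_fun_ifT; try exact: measurable_cst.
  apply: measurable_fun_eqr; [exact: hmeas | exact: measurable_cst].
apply: measurableT_comp; [exact: measurable_powRr | exact: psum_meas].
Qed.

Lemma a_meas n : measurable_fun setT (fun t => a t n).
Proof.
elim: n => [|n IH].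
  have -> : (fun t => a t 0) = cst 0 by apply/funext => t; rewrite a0.
  exact: measurable_cst.
have -> : (fun t => a t n.+1) = (fun t => a t n) \+ (fun t => term t n.+1).
  by apply/funext => t; rewrite aS.
by apply: measurable_funD => //; apply: term_meas.
Qed.

Lemma ruin_meas (x : R) : measurable [set t | exists n, wealth x xi n t <= 0].
Proof.
have -> : [set t | exists n, wealth x xi n t <= 0] =
   \bigcup_n ((fun t => wealth x xi n t) @^-1` [set` `]-oo, (0:R)]]).
  apply/seteqP; split => t /=.
    by move=> [n h]; exists n => //; rewrite /= in_itv.
  by move=> [n _]; rewrite /= in_itv => h; exists n.
apply: bigcupT_measurable => n; rewrite -[X in measurable X]setTI.
by apply: wealth_meas => //; exact: measurable_itv.
Qed.

Lemma sx_meas (x : R) : 0 <= x - 2 -> measurable [set t | ((x - 2)%:E < Ssum xi t)%E].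
Proof.
move=> hx2.
have -> : [set t | ((x - 2)%:E < Ssum xi t)%E] =
   \bigcup_n ((fun t => a t n) @^-1` [set` `](x - 2), +oo[]).
  apply/seteqP; split => t /=.
    move=> /(@S_gt x t hx2) [n hn]; exists n => //=; by rewrite in_itv /= hn.
  move=> [n _]; rewrite /= in_itv /= andbT => hn.
  by apply: (lt_le_trans _ (a_le_S t n)); rewrite lte_fin.
apply: bigcupT_measurable => n; rewrite -[X in measurable X]setTI.
by apply: a_meas => //; exact: measurable_itv.
Qed.

Lemma Z_meas i : measurable (Z i).
Proof.
rewrite /Z; case: ifP => hi //.
have -> : [set t | xi i t <> 1 /\ xi i t <> -1] =
   ~` (xi i @^-1` [set 1] `|` xi i @^-1` [set -1]).
  apply/seteqP; split => t /=.
    by move=> [h1 h2] [].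
  by move=> h; split => h'; apply: h; [left|right].
by apply: measurableC; apply: measurableU; apply: mpre.
Qed.

Lemma main (x : R) (hx : 2 < x) :
  P [set t | exists n : nat, wealth x xi n t <= 0] =
  P [set t | ((x - 2)%:E < Ssum xi t)%E].
Proof.
have hx' : 2 < x := hx.
have hx2 : 0 <= x - 2 by lra.
have hN : P.-negligible ((\bigcup_i Z i) `|` (\bigcup_K H K)).
  apply: negligibleU; apply: negligible_bigcup => k; apply/negligibleP.
  - exact: Z_meas.
  - exact: Z_null.
  - exact: H_meas.
  - exact: H_null.
case: hN => M [mM PM0 NM].
have key : forall A, measurable A -> P A = P (A `\` M).
  move=> A mA.
  transitivity (P (A `\` M) + P (A `&` M))%E; first exact: measureDI.
  have -> : P (A `&` M) = 0%E.
    apply/eqP; rewrite eq_le measure_ge0 andbT -[X in (_ <= X)%E]PM0.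
    by apply: le_measure; rewrite ?inE //; exact: measurableI.
  by rewrite adde0.
have hG : forall t, ~ M t -> G t.
  move=> t hM i hi; apply: contrapT => hne; apply: hM; apply: (NM t); left.
  exists i => //; rewrite /Z hi; split => h; apply: (hne); [left|right]; exact: h.
have hH : forall t, ~ M t -> ~ (\bigcup_K H K) t.
  by move=> s hM hHs; apply: hM; apply: (NM s); right.
rewrite (key _ (ruin_meas x)) (key _ (@sx_meas x hx2)); congr (P _).
apply/seteqP; split => t [h1 h2]; split => //.
  exact: (@ruin_sub x t (hG t h2) h1).
exact: (@sx_sub x t hx2 (hG t h2) (hH t h2) h1).
Qed.

End PSsec.

Theorem lemma2p2 (d : measure_display) (T : measurableType d) (R : realType)
  (P : probability T R) (xi : nat -> T -> R) (p x : R)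
  (hp0 : 0 < p) (hp1 : p < 1) (hx : 2 < x)
  (hmeas : forall n, (1 <= n)%N -> measurable_fun setT (xi n))
  (hindep : indep_seq P xi)
  (hplus : forall n, (1 <= n)%N -> P (xi n @^-1` [set 1]) = p%:E)
  (hminus : forall n, (1 <= n)%N -> P (xi n @^-1` [set -1]) = (1 - p)%:E) :
  P [set t | exists n : nat, wealth x xi n t <= 0] =
  P [set t | ((x - 2)%:E < Ssum xi t)%E].
Proof.
exact: (@main d T R P xi hmeas hindep p hplus hminus hp0 hp1 x hx).
Qed.
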